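(* Let $p$ be a probability rule for quantum many-worlds theory satisfying Axioms (A1)–(A3). Then for every allowed state $v=\sum_n v_n\lvert n\rangle$ and every $n\ge0$, $p_n(v)=|v_n|^2$.
   Context: Quantum many-worlds theory is defined as follows. The worlds are the vectors $\lvert n\rangle$, $n\in\{0,1,2,\dots\}$, of a countably infinite orthonormal basis of a complex Hilbert space. The allowed states are the vectors $v=\sum_n v_n\lvert n\rangle$ with $\sum_n|v_n|^2=1$, where $v_n=\langle n\vert v\rangle$ is the amplitude of world $n$. The allowed transformations are all unitary operators $T$, with matrix elements $T_{ij}=\langle i\rvert T\lvert j\rangle$. A probability rule assigns to each allowed state $v$ a sequence $(p_n(v))_{n\ge 0}$ of nonnegative reals with $\sum_n p_n(v)=1$. The axioms are: (A1) Present state dependence: $p_n$ depends only on the present state $v$, so $p$ is a function of the state alone. (A2) Weak connection with amplitudes: for every allowed state $v$, $v_n=0$ implies $p_n(v)=0$. (A3) Weak connection with transformations: for every allowed state $v$ and allowed transformation $T$, and every partition of $\{0,1,2,\dots\}$ into subsets $\mathcal S_k$ such that $T_{ij}=0$ whenever $i$ and $j$ lie in different subsets, we have $\sum_{n\in\mathcal S_k}p_n(v)=\sum_{n\in\mathcal S_k}p_n(Tv)$ for every $k$. *)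

(* Defs.v *)
From Stdlib Require Import Reals.
From Coquelicot Require Import Coquelicot.
Open Scope R_scope.

(* Vectors of the Hilbert space are written in the world basis |n>, n : nat:
   v : nat -> C with v n = <n|v>. *)
Definition vec := nat -> C.

Definition l2 (v : vec) : Prop := ex_series (fun n => Cmod (v n) ^ 2).

Definition norm2 (v : vec) : R := Series (fun n => Cmod (v n) ^ 2).

Definition allowed_state (v : vec) : Prop := is_series (fun n => Cmod (v n) ^ 2) 1.

Definition ket (j : nat) : vec := fun n => if Nat.eqb n j then 1%C else 0%C.

(* unitary operators on l^2(N): linear, maps l^2 into l^2, norm-preserving
   (isometric) and onto l^2.  (Its values outside l^2 are irrelevant.) *)
Definition unitary (T : vec -> vec) : Prop :=
  (forall v, l2 v -> l2 (T v)) /\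
  (forall (a : C) u v, l2 u -> l2 v ->
     forall n, T (fun m => (a * u m + v m)%C) n = (a * T u n + T v n)%C) /\
  (forall v, l2 v -> norm2 (T v) = norm2 v) /\
  (forall w, l2 w -> exists v, l2 v /\ forall n, T v n = w n).

Definition mat_el (T : vec -> vec) (i j : nat) : C := T (ket j) i.

(* a probability rule: for each allowed state, a probability sequence on N.
   (A1, present-state dependence, is built in: p is a function of the state.) *)
Definition probability_rule (p : vec -> nat -> R) : Prop :=
  forall v, allowed_state v -> (forall n, 0 <= p v n) /\ is_series (p v) 1.

Definition axiom_A2 (p : vec -> nat -> R) : Prop :=
  forall v, allowed_state v -> forall n, v n = 0%C -> p v n = 0.

Definition block_sum (q : nat -> R) (blk : nat -> nat) (k : nat) : R :=
  Series (fun n => if Nat.eqb (blk n) k then q n else 0).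

(* A partition of N into subsets
   S_k is given by a block-labelling function blk : nat -> nat
   (S_k = {n | blk n = k}); every partition of N has countably many blocks,
   so this covers all partitions. *)
Definition axiom_A3 (p : vec -> nat -> R) : Prop :=
  forall v (T : vec -> vec) (blk : nat -> nat),
    allowed_state v -> unitary T ->
    (forall i j, blk i <> blk j -> mat_el T i j = 0%C) ->
    forall k, block_sum (p v) blk k = block_sum (p (T v)) blk k.

(* Main.v *)
Require Import Defs.
From Stdlib Require Import Reals Lra Lia Arith FunctionalExtensionality.
From Coquelicot Require Import Coquelicot.
Open Scope R_scope.

Lemma sum_single (d : nat -> R) (a : nat) :
  (forall n, n <> a -> d n = 0) ->
  forall n, sum_n d n = if Nat.leb a n then d a else 0.
Proof.
  intros Hd n. induction n as [|n IH].
  - rewrite sum_O. destruct a; simpl. reflexivity. apply Hd. lia.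
  - rewrite sum_Sn, IH. change plus with Rplus.
    destruct (Nat.leb a n) eqn:E1; destruct (Nat.leb a (S n)) eqn:E2;
      apply Nat.leb_le in E1 || apply Nat.leb_gt in E1;
      apply Nat.leb_le in E2 || apply Nat.leb_gt in E2; try lia.
    all: match goal with |- ?x = ?y => change (@eq R x y) end.
    + rewrite (Hd (S n)) by lia. ring.
    + assert (a = S n) by lia. subst. ring.
    + rewrite (Hd (S n)) by lia. ring.
Qed.

Lemma is_series_single (d : nat -> R) (a : nat) :
  (forall n, n <> a -> d n = 0) -> is_series d (d a).
Proof.
  intros Hd. unfold is_series.
  apply filterlim_ext_loc with (fun _ => d a).
  - exists a. intros n Hn. pose proof (sum_single d a Hd n) as E.
    apply Nat.leb_le in Hn. rewrite Hn in E. symmetry. exact E.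
  - apply filterlim_const.
Qed.

Lemma Cmod2 (z : C) : Cmod z ^ 2 = fst z ^ 2 + snd z ^ 2.
Proof. unfold Cmod. rewrite pow2_sqrt; [reflexivity|nra]. Qed.

Definition Hm (al be : C) (r : R) (x y : C) : C * C :=
  ((RtoC (/r) * (Cconj al * x + Cconj be * y))%C, (RtoC (/r) * (- be * x + al * y))%C).
Definition Hi (al be : C) (r : R) (x y : C) : C * C :=
  ((RtoC (/r) * (al * x - Cconj be * y))%C, (RtoC (/r) * (be * x + Cconj al * y))%C).

Lemma Hm_norm al be r x y : r <> 0 -> r ^ 2 = Cmod al ^ 2 + Cmod be ^ 2 ->
  Cmod (fst (Hm al be r x y)) ^ 2 + Cmod (snd (Hm al be r x y)) ^ 2
  = Cmod x ^ 2 + Cmod y ^ 2.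
Proof.
  intros Hr0 Hr. rewrite !Cmod2 in *. destruct al as [a1 a2], be as [b1 b2], x as [x1 x2], y as [y1 y2].
  unfold Hm; cbn [fst snd] in Hr; simpl.
  transitivity ((/r)^2 * ((a1^2+a2^2+(b1^2+b2^2)) * ((x1^2+x2^2)+(y1^2+y2^2)))).
  - ring.
  - rewrite <- Hr. field. auto.
Qed.

Lemma Hm_Hi al be r x y : r <> 0 -> r ^ 2 = Cmod al ^ 2 + Cmod be ^ 2 ->
  let p := Hi al be r x y in Hm al be r (fst p) (snd p) = (x, y).
Proof.
  intros Hr0 Hr. rewrite !Cmod2 in *. destruct al as [a1 a2], be as [b1 b2], x as [x1 x2], y as [y1 y2].
  unfold Hm, Hi; cbn [fst snd] in Hr; simpl. unfold Cmult, Cplus, Cminus, Copp, Cconj, RtoC; simpl.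
  f_equal; f_equal.
  all: apply (Rmult_eq_reg_l (r^2)); [| apply pow_nonzero; auto].
  all: field_simplify; [| auto].
  all: rewrite Hr; ring.
Qed.

Lemma Hm_self al be r : r <> 0 -> r ^ 2 = Cmod al ^ 2 + Cmod be ^ 2 ->
  Hm al be r al be = (RtoC r, RtoC 0).
Proof.
  intros Hr0 Hr. rewrite !Cmod2 in *. destruct al as [a1 a2], be as [b1 b2].
  unfold Hm; cbn [fst snd] in Hr; simpl. unfold Cmult, Cplus, Cminus, Copp, Cconj, RtoC; simpl.
  f_equal; f_equal.
  all: apply (Rmult_eq_reg_l r); [| auto].
  all: field_simplify; [| auto].
  all: rewrite ?Hr; ring.
Qed.

Lemma is_series_mod2 (f g : nat -> R) a b l : a <> b ->
  (forall n, n <> a -> n <> b -> g n = f n) -> is_series f l ->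
  is_series g (l - f a - f b + g a + g b).
Proof.
  intros Hab Hg Hf.
  set (d1 := fun n => if Nat.eqb n a then g a - f a else 0).
  set (d2 := fun n => if Nat.eqb n b then g b - f b else 0).
  assert (H1 : is_series d1 (g a - f a)).
  { replace (g a - f a) with (d1 a) by (unfold d1; now rewrite Nat.eqb_refl).
    apply is_series_single. intros n Hn. unfold d1. apply Nat.eqb_neq in Hn. now rewrite Hn. }
  assert (H2 : is_series d2 (g b - f b)).
  { replace (g b - f b) with (d2 b) by (unfold d2; now rewrite Nat.eqb_refl).
    apply is_series_single. intros n Hn. unfold d2. apply Nat.eqb_neq in Hn. now rewrite Hn. }
  pose proof (is_series_plus _ _ _ _ (is_series_plus _ _ _ _ Hf H1) H2) as H.
  replace (l - f a - f b + g a + g b) with (plus (plus l (g a - f a)) (g b - f b))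
    by (change plus with Rplus; match goal with |- ?x = ?y => change (@eq R x y) end; ring).
  apply is_series_ext with (2 := H). intros n. change plus with Rplus.
  match goal with |- ?x = ?y => change (@eq R x y) end.
  unfold d1, d2. destruct (Nat.eqb n a) eqn:Ea; destruct (Nat.eqb n b) eqn:Eb.
  - apply Nat.eqb_eq in Ea, Eb. congruence.
  - apply Nat.eqb_eq in Ea. subst. ring.
  - apply Nat.eqb_eq in Eb. subst. ring.
  - apply Nat.eqb_neq in Ea, Eb. rewrite Hg by auto. ring.
Qed.

Definition Tm a b al be r (u : vec) : vec := fun n =>
  if Nat.eqb n a then fst (Hm al be r (u a) (u b))
  else if Nat.eqb n b then snd (Hm al be r (u a) (u b)) else u n.
Definition Ti a b al be r (u : vec) : vec := fun n =>
  if Nat.eqb n a then fst (Hi al be r (u a) (u b))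
  else if Nat.eqb n b then snd (Hi al be r (u a) (u b)) else u n.

Lemma mod2_l2 (u w : vec) a b : a <> b ->
  (forall n, n <> a -> n <> b -> w n = u n) -> l2 u -> l2 w.
Proof.
  intros Hab Hw [l Hl]. eexists. apply (is_series_mod2 (fun n => Cmod (u n) ^ 2) (fun n => Cmod (w n) ^ 2) a b l Hab); auto.
  intros n Ha Hb. now rewrite Hw.
Qed.

Lemma eqb_neq' n a : n <> a -> Nat.eqb n a = false.
Proof. apply Nat.eqb_neq. Qed.

Lemma Tm_unitary a b al be r : a <> b -> r <> 0 -> r ^ 2 = Cmod al ^ 2 + Cmod be ^ 2 ->
  unitary (Tm a b al be r).
Proof.
  intros Hab Hr0 Hr. assert (Hba : Nat.eqb b a = false) by (apply Nat.eqb_neq; auto).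
  split; [|split; [|split]].
  - intros v Hv. apply (mod2_l2 v _ a b Hab); auto.
    intros n Ha Hb. unfold Tm. now rewrite !eqb_neq'.
  - intros c u v Hu Hv n. unfold Tm, Hm; simpl.
    destruct (Nat.eqb n a); [|destruct (Nat.eqb n b)]; [ring|ring|reflexivity].
  - intros v [l Hl]. unfold norm2. rewrite (is_series_unique _ _ Hl).
    apply is_series_unique.
    pose proof (is_series_mod2 (fun n => Cmod (v n) ^ 2) (fun n => Cmod (Tm a b al be r v n) ^ 2) a b l Hab) as H.
    assert (E : l - Cmod (v a) ^ 2 - Cmod (v b) ^ 2 + Cmod (Tm a b al be r v a) ^ 2 + Cmod (Tm a b al be r v b) ^ 2 = l).
    { unfold Tm. rewrite Nat.eqb_refl, Hba, Nat.eqb_refl.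
      pose proof (Hm_norm al be r (v a) (v b) Hr0 Hr). lra. }
    assert (Hc : forall n, n <> a -> n <> b -> Cmod (Tm a b al be r v n) ^ 2 = Cmod (v n) ^ 2).
    { intros n Ha Hb. unfold Tm. now rewrite !eqb_neq'. }
    pose proof (H Hc Hl) as H'. cbv beta in H'. rewrite E in H'. exact H'.
  - intros w Hw. exists (Ti a b al be r w). split.
    + apply (mod2_l2 w _ a b Hab); auto. intros n Ha Hb. unfold Ti. now rewrite !eqb_neq'.
    + intros n. pose proof (Hm_Hi al be r (w a) (w b) Hr0 Hr) as E. cbv zeta in E.
      unfold Tm, Ti. rewrite Nat.eqb_refl, Hba, Nat.eqb_refl.
      destruct (Nat.eqb n a) eqn:Ea; [|destruct (Nat.eqb n b) eqn:Eb].
      * apply Nat.eqb_eq in Ea; subst. rewrite E. reflexivity.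
      * apply Nat.eqb_eq in Eb; subst. rewrite E. reflexivity.
      * reflexivity.
Qed.

Definition blk2 a b : nat -> nat := fun n =>
  if Nat.eqb n a then 0%nat else if Nat.eqb n b then 0%nat else S n.

Lemma is_series_zero : is_series (fun _ : nat => 0) 0.
Proof. apply (is_series_single (fun _ => 0) 0%nat). auto. Qed.

Lemma block_sum_pair q a b : a <> b -> block_sum q (blk2 a b) 0 = q a + q b.
Proof.
  intros Hab. unfold block_sum. apply is_series_unique.
  pose proof (is_series_mod2 (fun _ => 0)
    (fun n => if Nat.eqb (blk2 a b n) 0 then q n else 0) a b 0 Hab) as H.
  assert (Hba : Nat.eqb b a = false) by (apply Nat.eqb_neq; auto).
  unfold blk2 in *. rewrite Nat.eqb_refl, Hba, Nat.eqb_refl in H. simpl in H. rewrite Nat.eqb_refl in H. simpl in H.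
  replace (q a + q b) with (0 - 0 - 0 + q a + q b) by ring.
  apply H; [|apply is_series_zero].
  intros n Ha Hb. rewrite (eqb_neq' n a Ha), (eqb_neq' n b Hb). reflexivity.
Qed.

Lemma block_sum_single q a b c : c <> a -> c <> b -> block_sum q (blk2 a b) (S c) = q c.
Proof.
  intros Ha Hb. unfold block_sum. apply is_series_unique.
  set (g := fun n => if Nat.eqb (blk2 a b n) (S c) then q n else 0).
  replace (q c) with (g c).
  2:{ unfold g, blk2. rewrite (eqb_neq' c a Ha), (eqb_neq' c b Hb), Nat.eqb_refl. reflexivity. }
  apply is_series_single. intros n Hn. unfold g, blk2.
  destruct (Nat.eqb n a); auto. destruct (Nat.eqb n b); auto.
  simpl. rewrite eqb_neq'; auto.
Qed.

Lemma Cmod0_eq (z : C) : Cmod z ^ 2 = 0 -> z = 0%C.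
Proof. intros H. apply Cmod_eq_0. nra. Qed.

Lemma ML (p : vec -> nat -> R) (HA2 : axiom_A2 p) (HA3 : axiom_A3 p)
  (w w' : vec) a b : allowed_state w -> a <> b ->
  w' a = RtoC (sqrt (Cmod (w a) ^ 2 + Cmod (w b) ^ 2)) -> w' b = 0%C ->
  (forall c, c <> a -> c <> b -> w' c = w c) ->
  allowed_state w' /\ p w a + p w b = p w' a /\ (forall c, c <> a -> c <> b -> p w c = p w' c).
Proof.
  intros Hw Hab Ha Hb Hc.
  set (s := Cmod (w a) ^ 2 + Cmod (w b) ^ 2) in *.
  assert (Hs : 0 <= s) by (unfold s; nra).
  assert (Hw' : allowed_state w').
  { unfold allowed_state.
    pose proof (is_series_mod2 (fun n => Cmod (w n) ^ 2) (fun n => Cmod (w' n) ^ 2) a b 1 Hab) as H.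
    cbv beta in H. rewrite Ha, Hb, Cmod_R, Cmod_0, Rabs_pos_eq, pow2_sqrt in H by (auto; apply sqrt_pos).
    replace 1 with (1 - Cmod (w a) ^ 2 - Cmod (w b) ^ 2 + s + 0 ^ 2) by (unfold s; ring).
    apply H; auto. intros n Hna Hnb. now rewrite Hc. }
  assert (Hpb : p w' b = 0) by (apply HA2; auto).
  destruct (Req_dec s 0) as [Hs0|Hs0].
  - assert (Ea : w a = 0%C) by (apply Cmod0_eq; unfold s in Hs0; nra).
    assert (Eb : w b = 0%C) by (apply Cmod0_eq; unfold s in Hs0; nra).
    assert (E : w' = w).
    { apply functional_extensionality. intros n.
      destruct (Nat.eq_dec n a); [subst; rewrite Ha, Hs0, sqrt_0, Ea; reflexivity|].
      destruct (Nat.eq_dec n b); [subst; rewrite Hb, Eb; reflexivity|]. auto. }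
    subst w'. rewrite Hpb. repeat split; auto. rewrite (HA2 w Hw a Ea). ring.
  - set (r := sqrt s).
    assert (Hr0 : r <> 0) by (unfold r; intro H; apply sqrt_eq_0 in H; auto).
    assert (Hr : r ^ 2 = Cmod (w a) ^ 2 + Cmod (w b) ^ 2) by (unfold r; rewrite pow2_sqrt; auto).
    set (T := Tm a b (w a) (w b) r).
    assert (HT : unitary T) by (apply Tm_unitary; auto).
    assert (HTw : T w = w').
    { apply functional_extensionality. intros n. unfold T, Tm.
      pose proof (Hm_self (w a) (w b) r Hr0 Hr) as E. rewrite E. simpl.
      destruct (Nat.eqb n a) eqn:Ea; [apply Nat.eqb_eq in Ea; subst; now rewrite Ha|].
      destruct (Nat.eqb n b) eqn:Eb; [apply Nat.eqb_eq in Eb; subst; now rewrite Hb|].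
      apply Nat.eqb_neq in Ea, Eb. now rewrite Hc. }
    assert (Hmat : forall i j, blk2 a b i <> blk2 a b j -> mat_el T i j = 0%C).
    { intros i j Hij. unfold mat_el, T, Tm, Hm, blk2 in *. simpl.
      destruct (Nat.eqb i a) eqn:Ia; [|destruct (Nat.eqb i b) eqn:Ib].
      - destruct (Nat.eqb j a) eqn:Ja; [congruence|]. destruct (Nat.eqb j b) eqn:Jb; [congruence|].
        apply Nat.eqb_neq in Ja, Jb. unfold ket.
        rewrite (eqb_neq' a j), (eqb_neq' b j) by auto. ring.
      - destruct (Nat.eqb j a) eqn:Ja; [congruence|]. destruct (Nat.eqb j b) eqn:Jb; [congruence|].
        apply Nat.eqb_neq in Ja, Jb. unfold ket.
        rewrite (eqb_neq' a j), (eqb_neq' b j) by auto. ring.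
      - unfold ket. destruct (Nat.eqb i j) eqn:Iij; auto.
        apply Nat.eqb_eq in Iij. subst. rewrite Ia, Ib in Hij. congruence. }
    pose proof (HA3 w T (blk2 a b) Hw HT Hmat) as H3. rewrite HTw in H3.
    split; [auto|split].
    + pose proof (H3 0%nat) as H0. rewrite !block_sum_pair in H0 by auto. lra.
    + intros c Hca Hcb. pose proof (H3 (S c)) as H0. rewrite !block_sum_single in H0 by auto. exact H0.
Qed.
Lemma cauchy_lin (f : R -> R) (s : R) :
  (forall x y, 0 <= x -> 0 <= y -> x + y <= s -> f x + f y = f (x + y)) ->
  (forall x, 0 <= x -> x <= s -> 0 <= f x) ->
  forall x y, 0 <= x -> 0 <= y -> x + y <= s -> f x * y = f y * x.
Proof.
  intros Hadd Hpos x y Hx Hy Hxy.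
  assert (H0 : f 0 = 0).
  { pose proof (Hadd 0 0 (Rle_refl 0) (Rle_refl 0)) as H. rewrite Rplus_0_r in H. lra. }
  destruct (Req_dec y 0) as [->|Hy0]. { rewrite Rplus_0_r in Hxy. rewrite H0. ring. }
  destruct (Req_dec x 0) as [->|Hx0]. { rewrite H0. ring. }
  assert (Hmono : forall u v, 0 <= u -> u <= v -> v <= s -> f u <= f v).
  { intros u v Hu Huv Hv. pose proof (Hadd u (v - u) Hu ltac:(lra) ltac:(lra)) as H.
    replace (u + (v - u)) with v in H by ring. pose proof (Hpos (v-u) ltac:(lra) ltac:(lra)). lra. }
  assert (Hmul : forall t (m : nat), 0 <= t -> INR m * t <= s -> f (INR m * t) = INR m * f t).
  { intros t m Ht. induction m as [|m IH]; intros Hm.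
    - simpl. rewrite !Rmult_0_l. auto.
    - rewrite S_INR in *. assert (0 <= INR m * t) by (apply Rmult_le_pos; auto; apply pos_INR).
      replace ((INR m + 1) * t) with (INR m * t + t) by ring.
      rewrite <- (Hadd (INR m * t) t) by (auto; lra).
      rewrite IH by lra. ring. }
  set (D := f x * y - f y * x).
  assert (Hbound : forall N : nat, (0 < N)%nat -> Rabs D * INR N <= f y * y).
  { intros N HN. assert (HNr : 0 < INR N) by (apply lt_0_INR; auto).
    set (t := y / INR N).
    assert (Ht : 0 < t) by (unfold t; apply Rdiv_lt_0_compat; lra).
    assert (HNt : INR N * t = y) by (unfold t; field; lra).
    destruct (nfloor_ex (x / t)) as [m [Hm1 Hm2]]. { apply Rdiv_le_0_compat; lra. }
    assert (Hm1' : INR m * t <= x).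
    { apply (Rmult_le_compat_r t) in Hm1; [|lra]. replace (x / t * t) with x in Hm1 by (field; lra). exact Hm1. }
    assert (Hm2' : x < (INR m + 1) * t).
    { apply (Rmult_lt_compat_r t) in Hm2; [|lra]. replace (x / t * t) with x in Hm2 by (field; lra). exact Hm2. }
    assert (Ht_le_y : t <= y).
    { rewrite <- HNt. assert (1 <= INR N) by (apply (le_INR 1); lia). nra. }
    assert (Hmt0 : 0 <= INR m * t) by (apply Rmult_le_pos; [apply pos_INR|lra]).
    assert (E1 : f (INR m * t) = INR m * f t) by (apply Hmul; lra).
    assert (E2 : f (INR (S m) * t) = INR (S m) * f t) by (apply Hmul; [lra| rewrite S_INR; lra]).
    assert (E3 : f y = INR N * f t) by (rewrite <- HNt; apply Hmul; lra).
    assert (L1 : f (INR m * t) <= f x) by (apply Hmono; lra).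
    assert (L2 : f x <= f (INR (S m) * t)) by (apply Hmono; rewrite ?S_INR; lra).
    rewrite S_INR in E2, L2.
    assert (Hft : 0 <= f t) by (apply Hpos; lra).
    assert (HNt0 : 0 <= INR N * t) by nra.
    assert (HNF0 : 0 <= INR N * f t) by nra.
    assert (A1 : f x * (INR N * t) <= (INR m + 1) * f t * (INR N * t))
      by (apply Rmult_le_compat_r; lra).
    assert (A2 : INR m * f t * (INR N * t) <= f x * (INR N * t))
      by (apply Rmult_le_compat_r; lra).
    assert (A3 : INR N * f t * (INR m * t) <= INR N * f t * x)
      by (apply Rmult_le_compat_l; lra).
    assert (A4 : INR N * f t * x <= INR N * f t * ((INR m + 1) * t))
      by (apply Rmult_le_compat_l; lra).
    assert (Hup : D <= INR N * f t * t).
    { unfold D. rewrite E3, <- HNt. lra. }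
    assert (Hlo : - (INR N * f t * t) <= D).
    { unfold D. rewrite E3, <- HNt. lra. }
    replace (f y * y) with (INR N * (INR N * f t * t)) by (rewrite E3, <- HNt; ring).
    rewrite Rmult_comm. apply Rmult_le_compat_l; [lra|]. apply Rabs_le; lra. }
  destruct (Req_dec D 0) as [HD|HD]. { unfold D in HD. lra. }
  exfalso. assert (HaD : 0 < Rabs D) by (apply Rabs_pos_lt; auto).
  destruct (INR_archimed (Rabs D) (f y * y) HaD) as [N HN].
  destruct N as [|N]. { simpl in HN. assert (0 <= f y) by (apply Hpos; lra). nra. }
  pose proof (Hbound (S N) ltac:(lia)). lra.
Qed.

Definition S3 (v : vec) i j k x y z : vec := fun n =>
  if Nat.eqb n i then RtoC (sqrt x) else if Nat.eqb n j then RtoC (sqrt y)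
  else if Nat.eqb n k then RtoC (sqrt z) else v n.

Lemma CR (x : R) : 0 <= x -> Cmod (RtoC (sqrt x)) ^ 2 = x.
Proof. intros Hx. rewrite Cmod_R, Rabs_pos_eq by apply sqrt_pos. apply pow2_sqrt; auto. Qed.

Lemma R0C : RtoC 0 = 0%C.
Proof. reflexivity. Qed.

Lemma allowed_mod3 (u w : vec) i j k : allowed_state u -> i <> j -> j <> k -> i <> k ->
  (forall n, n <> i -> n <> j -> n <> k -> w n = u n) ->
  Cmod (w i) ^ 2 + Cmod (w j) ^ 2 + Cmod (w k) ^ 2 = Cmod (u i) ^ 2 + Cmod (u j) ^ 2 + Cmod (u k) ^ 2 ->
  allowed_state w.
Proof.
  intros Hu Hij Hjk Hik Hw Hn. unfold allowed_state in *.
  set (w1 := fun n => if Nat.eqb n k then u n else w n).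
  pose proof (is_series_mod2 (fun n => Cmod (u n) ^ 2) (fun n => Cmod (w1 n) ^ 2) i j 1 Hij) as H1.
  assert (H1' : is_series (fun n => Cmod (w1 n) ^ 2) (1 - Cmod (u i) ^ 2 - Cmod (u j) ^ 2 + Cmod (w i) ^ 2 + Cmod (w j) ^ 2)).
  { replace (Cmod (w i)) with (Cmod (w1 i)) by (unfold w1; now rewrite eqb_neq').
    replace (Cmod (w j)) with (Cmod (w1 j)) by (unfold w1; now rewrite eqb_neq').
    apply H1; auto. intros n Hni Hnj. unfold w1. destruct (Nat.eqb_spec n k); [subst|rewrite Hw]; auto. }
  assert (Hik' : k <> i) by auto.
  pose proof (is_series_mod2 (fun n => Cmod (w1 n) ^ 2) (fun n => Cmod (w n) ^ 2) k i (1 - Cmod (u i) ^ 2 - Cmod (u j) ^ 2 + Cmod (w i) ^ 2 + Cmod (w j) ^ 2) Hik') as H2.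
  cbv beta in H2.
  replace 1 with (1 - Cmod (u i) ^ 2 - Cmod (u j) ^ 2 + Cmod (w i) ^ 2 + Cmod (w j) ^ 2
     - Cmod (w1 k) ^ 2 - Cmod (w1 i) ^ 2 + Cmod (w k) ^ 2 + Cmod (w i) ^ 2).
  - apply H2; auto. intros n Hnk Hni. unfold w1. rewrite eqb_neq'; auto.
  - unfold w1. rewrite Nat.eqb_refl, (eqb_neq' i k) by auto. lra.
Qed.

Ltac pt := let c := fresh "c" in let h1 := fresh "h" in let h2 := fresh "h" in
  intros c h1 h2; unfold S3;
  repeat match goal with |- context [Nat.eqb ?a ?b] => destruct (Nat.eqb_spec a b) end;
  subst; try congruence; try reflexivity.

Lemma main_pair (p : vec -> nat -> R) (Hp : probability_rule p) (HA2 : axiom_A2 p) (HA3 : axiom_A3 p)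
  (v : vec) (Hv : allowed_state v) i j k (Hij : i <> j) (Hjk : j <> k) (Hik : i <> k) :
  p v i * Cmod (v j) ^ 2 = p v j * Cmod (v i) ^ 2.
Proof.
  assert (Eij : Nat.eqb i j = false) by (apply Nat.eqb_neq; auto).
  assert (Eji : Nat.eqb j i = false) by (apply Nat.eqb_neq; auto).
  assert (Ejk : Nat.eqb j k = false) by (apply Nat.eqb_neq; auto).
  assert (Ekj : Nat.eqb k j = false) by (apply Nat.eqb_neq; auto).
  assert (Eik : Nat.eqb i k = false) by (apply Nat.eqb_neq; auto).
  assert (Eki : Nat.eqb k i = false) by (apply Nat.eqb_neq; auto).
  assert (Hx0 : 0 <= Cmod (v i) ^ 2) by (apply pow2_ge_0).
  assert (Hy0 : 0 <= Cmod (v j) ^ 2) by (apply pow2_ge_0).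
  assert (Hz0 : 0 <= Cmod (v k) ^ 2) by (apply pow2_ge_0).
  pose (s := Cmod (v i) ^ 2 + Cmod (v j) ^ 2 + Cmod (v k) ^ 2).
  Ltac ev Eij Eji Ejk Ekj Eik Eki := unfold S3; rewrite ?Nat.eqb_refl, ?Eij, ?Eji, ?Ejk, ?Ekj, ?Eik, ?Eki; cbv iota.
  assert (HS : forall x y z, 0 <= x -> 0 <= y -> 0 <= z -> x + y + z = s -> allowed_state (S3 v i j k x y z)).
  { intros x y z Hx Hy Hz Hs. apply (allowed_mod3 v _ i j k); auto.
    - intros n Hni Hnj Hnk. unfold S3. rewrite !eqb_neq' by auto. reflexivity.
    - ev Eij Eji Ejk Ekj Eik Eki. rewrite !CR by auto. exact Hs. }
  pose (f := fun t => p (S3 v i j k t (s - t) 0) i).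
  assert (Ha : forall x y z, 0 <= x -> 0 <= y -> 0 <= z -> x + y + z = s -> p (S3 v i j k x y z) i = f x).
  { intros x y z Hx Hy Hz Hs.
    destruct (ML p HA2 HA3 (S3 v i j k x y z) (S3 v i j k x (s - x) 0) j k (HS x y z Hx Hy Hz Hs) Hjk)
      as [_ [_ H]].
    - ev Eij Eji Ejk Ekj Eik Eki. rewrite !CR by auto. do 2 f_equal. lra.
    - ev Eij Eji Ejk Ekj Eik Eki. rewrite sqrt_0. reflexivity.
    - pt.
    - apply H; auto. }
  assert (Hf0 : f 0 = 0).
  { unfold f. apply HA2. apply HS; unfold s; lra. ev Eij Eji Ejk Ekj Eik Eki. rewrite sqrt_0. reflexivity. }
  assert (Hsum : forall x y z, 0 <= x -> 0 <= y -> 0 <= z -> x + y + z = s ->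
     p (S3 v i j k x y z) i + p (S3 v i j k x y z) j = f (x + y)).
  { intros x y z Hx Hy Hz Hs.
    destruct (ML p HA2 HA3 (S3 v i j k x y z) (S3 v i j k (x + y) 0 z) i j (HS x y z Hx Hy Hz Hs) Hij)
      as [_ [H _]].
    - ev Eij Eji Ejk Ekj Eik Eki. rewrite !CR by auto. reflexivity.
    - ev Eij Eji Ejk Ekj Eik Eki. rewrite sqrt_0. reflexivity.
    - pt.
    - rewrite H. apply Ha; lra. }
  assert (Hb0 : forall y z, 0 <= y -> 0 <= z -> y + z = s -> p (S3 v i j k 0 y z) j = f y).
  { intros y z Hy Hz Hs. pose proof (Hsum 0 y z (Rle_refl 0) Hy Hz ltac:(lra)) as H.
    rewrite HA2 in H. rewrite !Rplus_0_l in H. exact H.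
    apply HS; auto; lra. ev Eij Eji Ejk Ekj Eik Eki. rewrite sqrt_0. reflexivity. }
  assert (Hb : forall x y z, 0 <= x -> 0 <= y -> 0 <= z -> x + y + z = s -> p (S3 v i j k x y z) j = f y).
  { intros x y z Hx Hy Hz Hs.
    assert (Hki : k <> i) by auto.
    destruct (ML p HA2 HA3 (S3 v i j k x y z) (S3 v i j k 0 y (x + z)) k i (HS x y z Hx Hy Hz Hs) Hki)
      as [_ [_ H]].
    - ev Eij Eji Ejk Ekj Eik Eki. rewrite !CR by auto. do 2 f_equal. lra.
    - ev Eij Eji Ejk Ekj Eik Eki. rewrite sqrt_0. reflexivity.
    - pt.
    - rewrite H by auto. apply Hb0; lra. }
  assert (Hadd : forall x y, 0 <= x -> 0 <= y -> x + y <= s -> f x + f y = f (x + y)).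
  { intros x y Hx Hy Hs. rewrite <- (Hsum x y (s - x - y)) by lra.
    rewrite (Ha x y (s - x - y)), (Hb x y (s - x - y)) by lra. reflexivity. }
  assert (Hpos : forall x, 0 <= x -> x <= s -> 0 <= f x).
  { intros x Hx Hs. unfold f. apply (Hp _ (HS x (s - x) 0 Hx ltac:(lra) (Rle_refl 0) ltac:(lra))). }
  assert (Hc : p v i = f (Cmod (v i) ^ 2)).
  { set (v1 := fun n => if Nat.eqb n k then RtoC (sqrt (Cmod (v k) ^ 2 + Cmod (v j) ^ 2))
                        else if Nat.eqb n j then 0%C else v n).
    assert (Hkj : k <> j) by auto.
    destruct (ML p HA2 HA3 v v1 k j Hv Hkj) as [Hv1 [_ H1]].
    - unfold v1. now rewrite Nat.eqb_refl.
    - unfold v1. now rewrite Ejk, Nat.eqb_refl.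
    - intros c Hc1 Hc2. unfold v1. now rewrite !eqb_neq'.
    - assert (Hp1 : p v1 j = 0) by (apply HA2; auto; unfold v1; now rewrite Ejk, Nat.eqb_refl).
      destruct (ML p HA2 HA3 v1 (S3 v i j k 0 (Cmod (v i) ^ 2) (Cmod (v k) ^ 2 + Cmod (v j) ^ 2)) j i Hv1 (not_eq_sym Hij))
        as [_ [H2 _]].
      + ev Eij Eji Ejk Ekj Eik Eki. unfold v1. rewrite Ejk, Nat.eqb_refl, Eik, Eij, Cmod_0. cbv iota.
        do 2 f_equal. ring.
      + ev Eij Eji Ejk Ekj Eik Eki. rewrite sqrt_0. reflexivity.
      + intros c Hc1 Hc2. unfold S3, v1.
        destruct (Nat.eqb_spec c i); [congruence|]. destruct (Nat.eqb_spec c j); [congruence|].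
        destruct (Nat.eqb_spec c k); reflexivity.
      + rewrite H1 by auto. rewrite Hb in H2 by (auto; unfold s; lra). lra. }
  assert (Hd : p v j = f (Cmod (v j) ^ 2)).
  { set (v2 := fun n => if Nat.eqb n k then RtoC (sqrt (Cmod (v k) ^ 2 + Cmod (v i) ^ 2))
                        else if Nat.eqb n i then 0%C else v n).
    assert (Hki : k <> i) by auto.
    destruct (ML p HA2 HA3 v v2 k i Hv Hki) as [Hv2 [_ H1]].
    - unfold v2. now rewrite Nat.eqb_refl.
    - unfold v2. now rewrite Eik, Nat.eqb_refl.
    - intros c Hc1 Hc2. unfold v2. now rewrite !eqb_neq'.
    - assert (Hp2 : p v2 i = 0) by (apply HA2; auto; unfold v2; now rewrite Eik, Nat.eqb_refl).
      destruct (ML p HA2 HA3 v2 (S3 v i j k (Cmod (v j) ^ 2) 0 (Cmod (v k) ^ 2 + Cmod (v i) ^ 2)) i j Hv2 Hij)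
        as [_ [H2 _]].
      + ev Eij Eji Ejk Ekj Eik Eki. unfold v2. rewrite Eik, Nat.eqb_refl, Ejk, Eji, Cmod_0. cbv iota.
        do 2 f_equal. ring.
      + ev Eij Eji Ejk Ekj Eik Eki. rewrite sqrt_0. reflexivity.
      + intros c Hc1 Hc2. unfold S3, v2.
        destruct (Nat.eqb_spec c i); [congruence|]. destruct (Nat.eqb_spec c j); [congruence|].
        destruct (Nat.eqb_spec c k); reflexivity.
      + rewrite H1 by auto. rewrite Ha in H2 by (auto; unfold s; lra). lra. }
  rewrite Hc, Hd. apply (cauchy_lin f s Hadd Hpos); auto. unfold s; lra.
Qed.

Theorem theorem2 (p : vec -> nat -> R)
  (Hp : probability_rule p) (HA2 : axiom_A2 p) (HA3 : axiom_A3 p) :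
  forall v : vec, allowed_state v -> forall n : nat, p v n = Cmod (v n) ^ 2.
Proof.
  intros v Hv n.
  assert (Hpair : forall j, p v n * Cmod (v j) ^ 2 = p v j * Cmod (v n) ^ 2).
  { intros j. destruct (Nat.eq_dec j n) as [->|Hjn]; [ring|].
    apply (main_pair p Hp HA2 HA3 v Hv n j (n + j + 1)); lia. }
  destruct (Hp v Hv) as [_ Hs].
  pose proof (is_series_scal_r (p v n) _ _ Hv) as H1.
  pose proof (is_series_scal_r (Cmod (v n) ^ 2) _ _ Hs) as H2.
  assert (H1' : is_series (fun j => p v j * Cmod (v n) ^ 2) (1 * p v n)).
  { apply is_series_ext with (2 := H1). intros j. simpl. rewrite <- Hpair. ring. }
  pose proof (is_series_unique _ _ H1') as E1.
  pose proof (is_series_unique _ _ H2) as E2.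
  lra.
Qed.
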